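(* Let $q$ be a prime power and let $\Gamma$ be a projective bundle in $\mathrm{PG}(2,q)$. Then every line $\ell$ of $\mathrm{PG}(2,q)$ has exactly $q+1$ tangent ovals in $\Gamma$, exactly one through each point of $\ell$. Moreover: if $q$ is even, all the $q+1$ tangent ovals of $\ell$ pass through a common point; if $q$ is odd, every point not on $\ell$ lies on either zero or exactly two of the tangent ovals of $\ell$.
   Context: $\mathrm{PG}(2,q)$ is the projective plane whose points and lines are the 1- and 2-dimensional subspaces of $\mathbb{F}_q^3$ (it has $q^2+q+1$ points, each line has $q+1$ points). An oval is a set of $q+1$ points of $\mathrm{PG}(2,q)$ such that every line meets it in at most two points. A projective bundle is a collection of $q^2+q+1$ ovals of $\mathrm{PG}(2,q)$ any two of which intersect in exactly one point. An oval of $\Gamma$ is tangent to a line $\ell$ if it meets $\ell$ in exactly one point. *)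

(* Defs.v *)
From HB Require Import structures.
From mathcomp Require Import all_boot all_order all_algebra all_field.
Set Implicit Arguments. Unset Strict Implicit. Unset Printing Implicit Defensive.
Import GRing.Theory.

(* PG(2,q) over a finite field F (q = #|F|): subspaces of F^3 are represented
   by their canonical generating matrices <<A>>%MS in 'M[F]_3 (row spaces). *)

Definition pg_points (F : finFieldType) : {set 'M[F]_3} :=
  [set A : 'M[F]_3 | (\rank A == 1%N) && (<<A>>%MS == A)].

Definition pg_lines (F : finFieldType) : {set 'M[F]_3} :=
  [set A : 'M[F]_3 | (\rank A == 2%N) && (<<A>>%MS == A)].

Definition on_line (F : finFieldType) (S : {set 'M[F]_3}) (L : 'M[F]_3)
  : {set 'M[F]_3} := [set P in S | (P <= L)%MS].

Definition is_oval (F : finFieldType) (O : {set 'M[F]_3}) : bool :=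
  [&& O \subset pg_points F, #|O| == #|F|.+1 &
      [forall L in pg_lines F, #|on_line O L| <= 2]].

Definition is_projective_bundle (F : finFieldType) (G : {set {set 'M[F]_3}}) : bool :=
  [&& [forall O in G, is_oval O], #|G| == (#|F| ^ 2 + #|F| + 1)%N &
      [forall O1 in G, forall O2 in G, (O1 != O2) ==> (#|O1 :&: O2| == 1%N)]].

Definition tangent (F : finFieldType) (O : {set 'M[F]_3}) (L : 'M[F]_3) : bool :=
  #|on_line O L| == 1%N.

Definition tangent_ovals (F : finFieldType) (G : {set {set 'M[F]_3}}) (L : 'M[F]_3)
  : {set {set 'M[F]_3}} := [set O in G | tangent O L].

(* Main.v *)
Require Import Defs.
From HB Require Import structures.
From mathcomp Require Import all_boot all_order all_algebra all_field.
From mathcomp Require Import mxabelem.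
From mathcomp Require Import zify.
Set Implicit Arguments. Unset Strict Implicit. Unset Printing Implicit Defensive.
Import GRing.Theory.


Lemma card_setE (T : finType) (A : {set T}) (p : pred T) :
  #|[set x in A | p x]| = \sum_(x in A) (p x : nat).
Proof.
rewrite -sum1_card [RHS](bigID p) /= [X in _ = _ + X]big1; last first.
  by move=> x /andP[_ /negbTE ->].
rewrite addn0; by apply: eq_big => [x|x]; rewrite inE // => /andP[_ ->].
Qed.

Section Geo.
Variable F : finFieldType.
Local Notation q := #|F|.

Lemma pt_gen (v : 'rV[F]_3) : v != 0%R -> (<<v>>%MS : 'M_3) \in pg_points F.
Proof. by move=> nz; rewrite inE mxrank_gen rank_rV nz genmx_id eqxx. Qed.

Lemma pt_fiber (P : 'M[F]_3) (v : 'rV[F]_3) : P \in pg_points F -> v != 0%R ->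
  (<<v>>%MS == P) = (v <= P)%MS.
Proof.
rewrite inE => /andP[rP /eqP gP] nz.
rewrite -{1}gP; apply/eqP/idP.
  by move/genmxP/andP=> [].
move=> sub; apply/genmxP.
by rewrite -(mxrank_leqif_eq sub).2 rank_rV nz (eqP rP).
Qed.

Lemma card_nz (A : 'M[F]_3) :
  #|[set v : 'rV[F]_3 | (v != 0%R) && (v <= A)%MS]| = (q ^ \rank A).-1.
Proof.
rewrite -card_rowg [#|rowg A|](cardsD1 0%R) mem_rowg sub0mx add1n /=.
by apply: eq_card => v; rewrite !inE.
Qed.

Lemma count_pts (L : 'M[F]_3) :
  q.-1 * #|[set P in pg_points F | (P <= L)%MS]| = (q ^ \rank L).-1.
Proof.
rewrite -card_nz -[RHS]sum1dep_card.
rewrite (partition_big (fun v : 'rV[F]_3 => (<<v>>%MS : 'M_3))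
   (fun P => P \in [set P in pg_points F | (P <= L)%MS])) /=; last first.
  move=> v /andP[nz sub]; rewrite inE pt_gen //= genmxE //.
rewrite mulnC -sum_nat_const; apply: eq_bigr => P.
rewrite inE => /andP[PP PL].
have rP : \rank P = 1%N by move: PP; rewrite inE => /andP[/eqP].
have := card_nz P; rewrite rP expn1 => <-; rewrite -sum1dep_card; apply: eq_bigl => v.
case: (eqVneq v 0%R) => [->|nz] //=.
rewrite pt_fiber //; apply/idP/andP => [vP|[]//]; split=> //.
exact: submx_trans vP PL.
Qed.
End Geo.


Lemma sum_eq_le (T : finType) (A : {pred T}) (f g : T -> nat) :
  (forall i, i \in A -> f i <= g i) ->
  \sum_(i in A) f i = \sum_(i in A) g i -> forall i, i \in A -> f i = g i.
Proof.
move=> le e i iA; apply/eqP; rewrite eqn_leq le //= leqNgt; apply/negP=> lt.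
move: e; rewrite (bigD1 i) //= [in RHS](bigD1 i) //= => e.
have hs : \sum_(j in A | j != i) f j <= \sum_(j in A | j != i) g j.
  by apply: leq_sum => j /andP[jA _]; exact: le.
by have := leq_add lt hs; rewrite addSn e ltnn.
Qed.

Section Bundle.
Variable F : finFieldType.
Variable G : {set {set 'M[F]_3}}.
Local Notation q := #|F|.
Local Notation Pts := (pg_points F).
Hypothesis hsub : forall O, O \in G -> O \subset Pts.
Hypothesis hcard : forall O, O \in G -> #|O| = q.+1.
Hypothesis hG : #|G| = (q^2+q+1)%N.
Hypothesis hI : forall O1 O2, O1 \in G -> O2 \in G -> O1 != O2 -> #|O1 :&: O2| = 1%N.
Hypothesis hN : #|Pts| = (q^2+q+1)%N.
Hypothesis hq : 1 < q.

Lemma cardOp O (p : pred 'M[F]_3) : O \in G ->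
  #|[set X in O | p X]| = \sum_(X in Pts) (X \in O) * p X.
Proof.
move=> OG; under eq_bigr do rewrite mulnb; rewrite -card_setE.
apply: eq_card => X; move: (subsetP (hsub OG) X); rewrite !inE.
by case: (X \in O) => [->|]//=; rewrite andbF.
Qed.

Lemma cardO O : O \in G -> #|O| = \sum_(X in Pts) (X \in O).
Proof.
move=> OG; have := cardOp predT OG; under eq_bigr do rewrite muln1.
move=> <-; apply: eq_card => X; by rewrite !inE andbT.
Qed.

Lemma lam_le1 P Q : P != Q -> \sum_(O in G) (P \in O) * (Q \in O) <= 1.
Proof.
move=> nPQ; under eq_bigr do rewrite mulnb; rewrite -card_setE leqNgt.
apply/negP => /card_gt1P [O1 [O2 []]]; rewrite !inE.
move=> /andP[O1G /andP[P1 Q1]] /andP[O2G /andP[P2 Q2]] n12.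
have := hI O1G O2G n12.
have : [set P; Q] \subset O1 :&: O2.
  by apply/subsetP => X; rewrite !inE => /orP[]/eqP->; rewrite ?P1 ?P2 ?Q1 ?Q2.
by move/subset_leq_card; rewrite cards2 nPQ => /[swap] ->.
Qed.

Lemma stepA P : P \in Pts ->
  \sum_(O in G) (P \in O) * q = \sum_(X in Pts :\ P) \sum_(O in G) (P \in O) * (X \in O).
Proof.
move=> PP; rewrite exchange_big /=; apply: eq_bigr => O OG.
case PO: (P \in O); last by rewrite mul0n big1 // => X _; rewrite mul0n.
rewrite mul1n; under eq_bigr do rewrite mul1n.
rewrite -card_setE; apply/eqP; rewrite eq_sym; apply/eqP.
have := cardsD1 P O; rewrite PO hcard // add1n => -[->].
apply: eq_card => X; move: (subsetP (hsub OG) X); rewrite !inE.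
by case: (X \in O) => [->|]//=; rewrite ?andbT ?andbF.
Qed.

Lemma cardD1 P : P \in Pts -> #|Pts :\ P| = q.+1 * q.
Proof.
move=> PP; have := cardsD1 P Pts; rewrite PP hN /= -mulnn => h; nia.
Qed.

Lemma r_le P : P \in Pts -> \sum_(O in G) (P \in O) <= q.+1.
Proof.
move=> PP; have h := stepA PP.
have : \sum_(X in Pts :\ P) \sum_(O in G) (P \in O) * (X \in O) <= \sum_(X in Pts :\ P) 1.
  apply: leq_sum => X; rewrite !inE => /andP[XP _]; apply: lam_le1; by rewrite eq_sym.
rewrite -h sum1_card cardD1 // -big_distrl /=.
by rewrite leq_pmul2r // ltnW.
Qed.

Lemma rP P : P \in Pts -> \sum_(O in G) (P \in O) = q.+1.
Proof.
apply: (sum_eq_le r_le).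
rewrite exchange_big /= sum_nat_const hN.
under eq_bigr => O OG do rewrite -cardO // hcard //.
by rewrite sum_nat_const hG.
Qed.

Lemma lam1 P Q : P \in Pts -> Q \in Pts -> P != Q ->
  \sum_(O in G) (P \in O) * (Q \in O) = 1.
Proof.
move=> PP QP nPQ.
have h := stepA PP; rewrite -big_distrl /= rP // in h.
have Qin : Q \in Pts :\ P by rewrite in_setD1 eq_sym nPQ QP.
apply: (@sum_eq_le _ (mem (Pts :\ P)) (fun X => \sum_(O in G) (P \in O) * (X \in O)) (fun=> 1%N) _ _ _ Qin) => [X|].
  rewrite in_setD1 => /andP[XP _]; apply: lam_le1; by rewrite eq_sym.
by rewrite -h sum1_card cardD1.
Qed.

Section Line.
Variable L : 'M[F]_3.
Hypothesis hline : forall O, O \in G -> #|on_line O L| <= 2.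
Local Notation Lp := [set X in Pts | (X <= L)%MS].
Local Notation Off := [set X in Pts | ~~ (X <= L)%MS].
Hypothesis hLp : #|Lp| = q.+1.
Local Notation T := (tangent_ovals G L).

Lemma split_pts f : \sum_(X in Pts) f X = \sum_(X in Lp) f X + \sum_(X in Off) f X.
Proof.
rewrite (bigID (fun X => (X <= L)%MS)) /=.
by congr (_ + _); apply: eq_bigl => X; rewrite !inE.
Qed.

Lemma cOL O : O \in G -> #|on_line O L| = \sum_(X in Lp) (X \in O).
Proof.
move=> OG; rewrite /on_line cardOp // split_pts [X in _ + X]big1 ?addn0.
  by apply: eq_bigr => X; rewrite inE => /andP[_ ->]; rewrite muln1.
by move=> X; rewrite inE => /andP[_ /negbTE ->]; rewrite muln0.
Qed.

Lemma Tset (p : pred {set 'M[F]_3}) :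
  [set O in T | p O] = [set O in G | tangent O L && p O].
Proof. by apply/setP => O; rewrite !inE andbA. Qed.

Lemma sumT f : \sum_(O in T) f O = \sum_(O in G) tangent O L * f O.
Proof.
rewrite big_mkcond [RHS]big_mkcond; apply: eq_bigr => O _; rewrite inE.
by case: (O \in G); case: (tangent O L); rewrite ?mul0n ?mul1n.
Qed.

Lemma tcard p : #|[set O in T | p O]| = \sum_(O in G) tangent O L * p O.
Proof. by rewrite Tset card_setE; apply: eq_bigr => O _; rewrite mulnb. Qed.

Lemma tan1 P : P \in Lp -> #|[set O in T | P \in O]| = 1.
Proof.
move=> PL; have := PL; rewrite inE => /andP[PP PLe].
pose d (O : {set 'M[F]_3}) := \sum_(X in Lp :\ P) (X \in O).
have hc : forall O, O \in G -> #|on_line O L| = (P \in O) + d O.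
  move=> O OG; rewrite cOL // (bigD1 P) //=; congr (_ + _).
  by apply: eq_bigl => X; rewrite in_setD1 andbC.
have F1 : \sum_(O in G) (P \in O) * d O = q.
  under eq_bigr do rewrite big_distrr /=.
  rewrite exchange_big /= (eq_bigr (fun=> 1%N)).
    by rewrite sum1_card; have := cardsD1 P Lp; rewrite PL hLp add1n => -[->].
  move=> X; rewrite in_setD1 => /andP[nXP XL]; apply: lam1 => //.
    by move: XL; rewrite inE => /andP[].
  by rewrite eq_sym.
rewrite tcard.
have e : forall O, O \in G ->
    ((P \in O) : nat) = tangent O L * (P \in O) + (P \in O) * d O.
  move=> O OG; case PO: (P \in O); rewrite ?muln0 ?mul0n //.
  have := hline OG; rewrite /tangent hc // PO.
  by case: (d O) => [|[|]] //.
have := rP PP; rewrite (eq_bigr _ e) big_split /= F1.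
by move=> h; apply/eqP; rewrite -(eqn_add2r #|F|) h add1n.
Qed.

Lemma cardT : #|T| = q.+1.
Proof.
rewrite -sum1_card sumT.
have e : forall O, O \in G -> tangent O L * 1 = \sum_(X in Lp) tangent O L * (X \in O).
  move=> O OG; rewrite -big_distrr /= -cOL //.
  by case t: (tangent O L) => //; rewrite mul1n (eqP t).
rewrite (eq_bigr _ e) exchange_big /= -hLp -sum1_card.
by apply: eq_bigr => X XL; rewrite -tcard tan1.
Qed.

Lemma offP Q : Q \in Off -> (Q \in Pts) /\ ~~ (Q <= L)%MS.
Proof. by rewrite inE => /andP[]. Qed.

Lemma tQ_parity Q : Q \in Off -> odd #|[set O in T | Q \in O]| = odd q.+1.
Proof.
move=> /offP [QP nQL].
have S : \sum_(O in G) (Q \in O) * #|on_line O L| = q.+1.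
  under eq_bigr => O OG do rewrite cOL // big_distrr /=.
  rewrite exchange_big /= -hLp -sum1_card; apply: eq_bigr => X.
  rewrite inE => /andP[XP XL]; apply: lam1 => //.
  by apply: contraNneq nQL => ->.
have e : forall O, O \in G -> (Q \in O) * #|on_line O L| =
   tangent O L * (Q \in O) + 2 * ((Q \in O) * (#|on_line O L| == 2)).
  move=> O OG; rewrite /tangent; have := hline OG.
  by case: (Q \in O); case: #|on_line O L| => [|[|[|]]] //.
rewrite -S (eq_bigr _ e) big_split /= -big_distrr /= oddD oddM /= addbF.
by rewrite tcard.
Qed.

Lemma sumOff_O O : O \in T -> \sum_(X in Off) (X \in O) = q.
Proof.
rewrite inE => /andP[OG /eqP t].
have := cardO OG; rewrite hcard // split_pts -cOL // t add1n => -[].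
by [].
Qed.

Lemma sumOff_OO O O' : O \in T -> O' \in T -> O != O' ->
  \sum_(X in Off) (X \in O) * (X \in O') = 1.
Proof.
move=> OT O'T nOO; have := OT; rewrite inE => /andP[OG _].
have := O'T; rewrite inE => /andP[O'G _].
have := hI OG O'G nOO.
have -> : O :&: O' = [set X in O | X \in O'] by apply/setP => X; rewrite !inE.
rewrite cardOp // split_pts big1 ?add0n // => X XL.
case XO: (X \in O); case XO': (X \in O') => //=.
have := tan1 XL.
have : [set O; O'] \subset [set O0 in T | X \in O0].
  by apply/subsetP => Y; rewrite in_set2 => /orP[]/eqP->; rewrite in_set ?XO ?XO' ?OT ?O'T.
by move/subset_leq_card; rewrite cards2 nOO => /[swap] ->.
Qed.

Lemma S1 : \sum_(Q in Off) #|[set O in T | Q \in O]| = q.+1 * q.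
Proof.
under eq_bigr do rewrite card_setE.
rewrite exchange_big /= -cardT -sum_nat_const; apply: eq_bigr => O OT.
exact: sumOff_O.
Qed.

Lemma S2 : \sum_(Q in Off) #|[set O in T | Q \in O]| ^ 2 = q.+1 * (q + q).
Proof.
under eq_bigr do rewrite card_setE -mulnn big_distrlr /=.
rewrite exchange_big /= -cardT -sum_nat_const; apply: eq_bigr => O OT.
rewrite exchange_big /= (bigD1 O) //=.
have -> : \sum_(Q in Off) (Q \in O) * (Q \in O) = q.
  by rewrite -(sumOff_O OT); apply: eq_bigr => X _; rewrite mulnb andbb.
congr (_ + _).
rewrite (eq_bigr (fun=> 1%N)); last first.
  by move=> O' /andP[O'T nO]; apply: sumOff_OO; rewrite // eq_sym.
have := cardT; rewrite -sum1_card (bigD1 O) //= add1n => -[].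
by [].
Qed.
Lemma part_odd : odd q -> forall P, P \in Pts -> ~~ (P <= L)%MS ->
  #|[set O in T | P \in O]| \in [:: 0%N; 2%N].
Proof.
move=> oq P PP nPL.
have PO : P \in Off by rewrite inE PP.
pose t Q := #|[set O in T | Q \in O]|.
have ev : forall Q, Q \in Off -> ~~ odd (t Q) by move=> Q QO; rewrite /t tQ_parity //= oq.
have h := @sum_eq_le _ (mem Off) (fun Q => 2 * t Q) (fun Q => t Q ^ 2) _ _ P PO.
have {h} h : 2 * t P = t P ^ 2.
  apply: h.
    move=> Q QO; have := ev Q QO; case: (t Q) => [|[|n]] //= _; nia.
  rewrite -big_distrr /= S1 S2; nia.
rewrite -/(t P); have [->|tp] := posnP (t P); first by [].
have : t P = 2 by apply/eqP; rewrite -(eqn_pmul2r tp) mulnn -h.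
by move->.
Qed.

Lemma cardOff : #|Off| = (q ^ 2)%N.
Proof.
have := split_pts (fun=> 1%N); rewrite !sum1_card hN hLp => h; lia.
Qed.

Lemma part_even : ~~ odd q -> exists2 P, P \in Pts & forall O, O \in T -> P \in O.
Proof.
move=> eq.
pose t Q := #|[set O in T | Q \in O]|.
have od : forall Q, Q \in Off -> odd (t Q) by move=> Q QO; rewrite /t tQ_parity //= eq.
pose u Q := (t Q).-1.
have tu : forall Q, Q \in Off -> t Q = (u Q).+1.
  by move=> Q QO; rewrite /u prednK // odd_gt0 // od.
have Su : \sum_(Q in Off) u Q = q.
  have := S1; rewrite -/t (eq_bigr _ tu).
  under eq_bigr do rewrite -addn1.
  rewrite big_split /= sum1_card cardOff => h.
  by apply/eqP; rewrite -(eqn_add2r (q ^ 2)) h mulSn mulnn.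
have Su2 : \sum_(Q in Off) u Q ^ 2 = (q ^ 2)%N.
  have := S2; rewrite -/t (eq_bigr (fun Q => (u Q) ^ 2 + (u Q + u Q) + 1)%N); last first.
    by move=> Q QO; rewrite -/(t Q) tu // -!mulnn; nia.
  rewrite !big_split Su sum1_card cardOff => h.
  apply/eqP; rewrite -(eqn_add2r (q + q + q ^ 2)) addnA h; apply/eqP.
  rewrite -!mulnn; nia.
have uq : forall Q, Q \in Off -> u Q <= q.
  by move=> Q QO; rewrite -Su (bigD1 Q) //= leq_addr.
have e := @sum_eq_le _ (mem Off) (fun Q => u Q ^ 2) (fun Q => q * u Q).
have {e} e : forall Q, Q \in Off -> u Q ^ 2 = q * u Q.
  apply: e.
    by move=> Q QO; rewrite -mulnn leq_mul2r (uq Q QO) orbT.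
  by rewrite -big_distrr /= Su Su2 mulnn.
case: (pickP (fun Q => (Q \in Off) && (0 < u Q))) => [Q /andP[QO uQ]| none]; last first.
  move: Su; rewrite big1 => [h|Q QO]; first by move: hq; rewrite -h.
  by have := none Q; rewrite QO /= lt0n => /negbFE/eqP.
have uQq : u Q = q.
  by apply/eqP; rewrite -(eqn_pmul2r uQ) mulnn e // mulnC.
exists Q; first by case/offP: QO.
have eT : [set O in T | Q \in O] = T.
  apply/eqP; rewrite eqEcard; apply/andP; split.
    by apply/subsetP => O; rewrite inE => /andP[].
  by rewrite cardT -/(t Q) tu // uQq.
by move=> O; rewrite -eT inE => /andP[].
Qed.

Lemma main_line :
  [/\ #|T| = q.+1,
      (forall P, P \in Pts -> (P <= L)%MS -> #|[set O in T | P \in O]| = 1%N),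
      (~~ odd q -> exists2 P, P \in Pts & forall O, O \in T -> P \in O) &
      (odd q -> forall P, P \in Pts -> ~~ (P <= L)%MS ->
           #|[set O in T | P \in O]| \in [:: 0%N; 2%N])].
Proof.
split.
- exact: cardT.
- by move=> P PP PL; apply: tan1; rewrite inE PP.
- exact: part_even.
- exact: part_odd.
Qed.
End Line.
End Bundle.

Theorem lemma4p6 (F : finFieldType) (G : {set {set 'M[F]_3}}) :
  is_projective_bundle G ->
  forall L, L \in pg_lines F ->
    [/\ #|tangent_ovals G L| = #|F|.+1,
        (forall P, P \in pg_points F -> (P <= L)%MS ->
           #|[set O in tangent_ovals G L | P \in O]| = 1%N),
        (~~ odd #|F| ->
           exists2 P, P \in pg_points F & forall O, O \in tangent_ovals G L -> P \in O) &
        (odd #|F| ->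
           forall P, P \in pg_points F -> ~~ (P <= L)%MS ->
             #|[set O in tangent_ovals G L | P \in O]| \in [:: 0%N; 2%N])].
Proof.
move=> /and3P[/forall_inP hov /eqP hG /forall_inP hI'] L hL.
have hsub : forall O, O \in G -> O \subset pg_points F by move=> O /hov /and3P[].
have hcard : forall O, O \in G -> #|O| = #|F|.+1 by move=> O /hov /and3P[_ /eqP].
have hline : forall O, O \in G -> #|on_line O L| <= 2.
  by move=> O /hov /and3P[_ _ /forall_inP]; apply.
have hI : forall O1 O2, O1 \in G -> O2 \in G -> O1 != O2 -> #|O1 :&: O2| = 1%N.
  move=> O1 O2 h1 h2 ne; have := hI' O1 h1.
  by move/forall_inP/(_ O2 h2)/implyP/(_ ne)/eqP.
have hq : 1 < #|F| := card_finNzRing_gt1 F.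
have hN : #|pg_points F| = (#|F| ^ 2 + #|F| + 1)%N.
  have := count_pts (1%:M : 'M[F]_3)%R; rewrite mxrank1.
  have -> : [set P in pg_points F | (P <= (1%:M)%R)%MS] = pg_points F.
    by apply/setP => P; rewrite inE submx1 andbT.
  move: #|pg_points F| hq => N; case: #|F| => [|[|k]] // _ h.
  apply/eqP; rewrite -(eqn_pmul2l (ltn0Sn k)) h; apply/eqP; rewrite -!mulnn /=.
  rewrite !expnS expn0; nia.
have hLp : #|[set X in pg_points F | (X <= L)%MS]| = #|F|.+1.
  have := count_pts L; move: hL; rewrite inE => /andP[/eqP -> _].
  move: #|[set X in pg_points F | (X <= L)%MS]| hq => N; case: #|F| => [|[|k]] // _ h.
  apply/eqP; rewrite -(eqn_pmul2l (ltn0Sn k)) h; apply/eqP; rewrite /=.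
  rewrite !expnS expn0; nia.
exact: (main_line hsub hcard hG hI hN hq hline hLp).
Qed.
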